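(* Let $M=\max_{x\in V}d_x^{-1/2}$. For all $\lambda,\mu>0$ and $x,y\in V$, $$|\mathrm{KD}_\lambda(x,y)-\mathrm{KD}_\mu(x,y)|\le 2M\,\mathrm{vol}(V)^{1/2}|\lambda-\mu|.$$
   Context: Let $H=(V,E,w)$ be a weighted hypergraph: $V$ is a finite set, $E$ a set of nonempty subsets of $V$, $w\colon E\to\mathbb{R}_{>0}$. Write $x\sim y$ if some $e\in E$ contains both; $H$ is assumed connected. The degree is $d_x=\sum_{e\ni x}w_e>0$, $D=\mathrm{diag}(d_x)$, $\mathrm{vol}(V)=\sum_x d_x$. The distance $d(x,y)$ is the minimal $n$ with a chain $x=z_0\sim\cdots\sim z_n=y$. $\delta_x$ is the indicator of $x$. $\mathbb{R}^V$ carries the inner product $\langle f,g\rangle=\sum_x f(x)g(x)/d_x$ with norm $\|\cdot\|$. For $e\in E$ let $B_e=\mathrm{Conv}\{\delta_x-\delta_y : x,y\in e\}$. The multivalued hypergraph Laplacian is $L(f)=\{\sum_{e}w_e\mathtt{b}_e(\mathtt{b}_e^\top f) : \mathtt{b}_e\in\operatorname{argmax}_{\mathtt b\in B_e}\mathtt b^\top f\}$ and the normalized Laplacian is $\mathcal{L}f=L(D^{-1}f)$, a maximal monotone operator on $(\mathbb{R}^V,\langle\cdot,\cdot\rangle)$. For $\lambda>0$ the resolvent $J_\lambda=(I+\lambda\mathcal L)^{-1}$ is a single-valued map $\mathbb{R}^V\to\mathbb{R}^V$ (equivalently $J_\lambda f=\operatorname{argmin}_g\{\frac{1}{2\lambda}\|f-g\|^2+Q(D^{-1}g)\}$,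 $Q(g)=\frac12\sum_e w_e\max_{x,y\in e}(g(x)-g(y))^2$). A function $f$ is weighted $1$-Lipschitz if $|f(x)/d_x-f(y)/d_y|\le d(x,y)$ for all $x,y$; $\mathrm{Lip}^1_w(V)$ denotes the set of such functions. $\mathrm{KD}_\lambda(x,y)=\sup\{\langle J_\lambda f,\delta_x-\delta_y\rangle : f\in\mathrm{Lip}^1_w(V)\}$. *)

(* Defs.v *)
From HB Require Import structures.
From mathcomp Require Import all_boot all_order all_algebra.
From mathcomp Require Import boolp classical_sets reals.
From Stdlib Require Import ClassicalEpsilon.

Set Implicit Arguments.
Unset Strict Implicit.
Unset Printing Implicit Defensive.

Import Order.TTheory GRing.Theory Num.Theory.
Local Open Scope ring_scope.

Section Hypergraph.
Context {R : realType} {V : finType}.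
(* A weighted hypergraph H = (V, E, w): E is a set of subsets of V,
   w gives the weight of each hyperedge (only its values on E matter). *)
Variables (E : {set {set V}}) (w : {set V} -> R).

Definition deg (x : V) : R := \sum_(e in E | x \in e) w e.

Definition vol : R := \sum_x deg x.

Definition inner (f g : V -> R) : R := \sum_x f x * g x / deg x.

Definition dot (b h : V -> R) : R := \sum_x b x * h x.

Definition delta (x : V) : V -> R := fun z => (z == x)%:R.

(* b ∈ B_e = Conv{ delta_x - delta_y : x, y ∈ e } *)
Definition inB (e : {set V}) (b : V -> R) : Prop :=
  exists c : V -> V -> R,
    [/\ (forall x y, 0 <= c x y),
        \sum_x \sum_y c x y = 1,
        (forall x y, c x y != 0 -> (x \in e) && (y \in e)) &
        b = (fun z => \sum_x \sum_y c x y * (delta x z - delta y z))].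

Definition argmaxB (e : {set V}) (h b : V -> R) : Prop :=
  inB e b /\ (forall b', inB e b' -> dot b' h <= dot b h).

Definition Lap (h u : V -> R) : Prop :=
  exists bs : {set V} -> V -> R,
    (forall e, e \in E -> argmaxB e h (bs e)) /\
    u = (fun z => \sum_(e in E) w e * bs e z * dot (bs e) h).

Definition NLap (f u : V -> R) : Prop := Lap (fun z => f z / deg z) u.

Definition is_resolvent (lam : R) (f g : V -> R) : Prop :=
  exists u, NLap g u /\ f = (fun z => g z + lam * u z).

(* J_lam f : the (unique, by maximal monotonicity) g with f ∈ g + lam L g *)
Definition resolvent (lam : R) (f : V -> R) : V -> R :=
  epsilon (inhabits (fun _ : V => 0 : R)) (is_resolvent lam f).

Definition adj : rel V := fun x y => [exists e in E, (x \in e) && (y \in e)].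

Definition walk (x y : V) (n : nat) : bool :=
  [exists s : n.-tuple V, path adj x s && (last x s == y)].

(* d(x,y) = minimal length of such a chain (0 if none; H is assumed connected) *)
Definition dist (x y : V) : nat :=
  match pselect (exists n, walk x y n) with
  | left h => ex_minn h
  | right _ => 0%N
  end.

Definition lip1 (f : V -> R) : Prop :=
  forall x y, `|f x / deg x - f y / deg y| <= (dist x y)%:R.

Definition KD (lam : R) (x y : V) : R :=
  sup [set r : R | exists f, lip1 f /\
         r = inner (resolvent lam f) (fun z => delta x z - delta y z)].

Definition Mconst : R := \big[Num.max/0]_x (Num.sqrt (deg x))^-1.

End Hypergraph.

(* Main.v *)
Require Import Defs.
From HB Require Import structures.
From mathcomp Require Import all_boot all_order all_algebra.
From mathcomp Require Import boolp classical_sets reals.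
From mathcomp Require Import ring lra.
From mathcomp Require topology normedtype derive.
From Stdlib Require ClassicalEpsilon.
Import Order.TTheory GRing.Theory Num.Theory.
Local Open Scope ring_scope.
Module Part1.

Section Alg.
Context {R : realType} {V : finType}.
Variables (E : {set {set V}}) (w : {set V} -> R).
Hypothesis hE : forall e, e \in E -> (0 < #|e|)%N.
Hypothesis hw : forall e, e \in E -> 0 < w e.
Hypothesis hd : forall x : V, 0 < deg E w x.
Local Notation d := (deg E w).

Lemma sum_delta (x : V) (h : V -> R) : \sum_z (delta x z : R) * h z = h x.
Proof.
rewrite (bigD1 x) //= /delta eqxx mul1r big1 ?addr0 // => z /negbTE ->.
by rewrite mul0r.
Qed.

Lemma sum_deltaB (x y : V) (h : V -> R) :
  \sum_z ((delta x z : R) - delta y z) * h z = h x - h y.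
Proof.
under eq_bigr do rewrite mulrBl.
by rewrite sumrB !sum_delta.
Qed.

Lemma dot_inB (c : V -> V -> R) (h : V -> R) :
  dot (fun z => \sum_x \sum_y c x y * (delta x z - delta y z)) h
  = \sum_x \sum_y c x y * (h x - h y).
Proof.
rewrite /dot.
transitivity (\sum_z \sum_x \sum_y c x y * ((delta x z - delta y z) * h z)).
  apply eq_bigr => z _; rewrite mulr_suml; apply eq_bigr => x _.
  rewrite mulr_suml; apply eq_bigr => y _; by rewrite mulrA.
rewrite exchange_big; apply eq_bigr => x _; rewrite exchange_big.
apply eq_bigr => y _.
by rewrite -mulr_sumr sum_deltaB.
Qed.

Lemma inB_le (e : {set V}) (b h : V -> R) (m : R) :
  inB e b -> (forall x y, x \in e -> y \in e -> h x - h y <= m) ->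
  dot b h <= m.
Proof.
move=> [c [c0 c1 cs ->]] hm.
rewrite dot_inB.
apply: (@le_trans _ _ (\sum_x \sum_y c x y * m)).
  apply: ler_sum => x _; apply: ler_sum => y _.
  have [->|cn] := eqVneq (c x y) 0; first by rewrite !mul0r.
  move: (cs x y cn) => /andP [xe ye].
  by apply: ler_wpM2l => //; apply: hm.
have -> : \sum_x \sum_y c x y * m = (\sum_x \sum_y c x y) * m.
  by rewrite mulr_suml; apply eq_bigr => x _; rewrite mulr_suml.
by rewrite c1 mul1r.
Qed.

Lemma sum_ind2 (a b : V) (F : V -> V -> R) :
  \sum_x \sum_y ((x == a) && (y == b))%:R * F x y = F a b.
Proof.
rewrite (bigD1 a) //= [X in _ + X]big1 ?addr0; last first.
  move=> x xa; apply big1 => y _; by rewrite (negbTE xa) /= mul0r.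
rewrite (bigD1 b) //= eqxx eqxx mul1r big1 ?addr0 // => y /negbTE ->.
by rewrite andbF mul0r.
Qed.

Lemma pair_inB (e : {set V}) (a b : V) :
  a \in e -> b \in e -> inB e (fun z => (delta a z : R) - delta b z).
Proof.
move=> ae be.
exists (fun x y => ((x == a) && (y == b))%:R); split.
- by move=> x y; rewrite ler0n.
- transitivity (\sum_x \sum_y ((x == a) && (y == b))%:R * (1:R)).
    by apply eq_bigr => x _; apply eq_bigr => y _; rewrite mulr1.
  exact: (sum_ind2 a b (fun _ _ => 1)).
- move=> x y; case: (boolP ((x == a) && (y == b))) => [/andP[/eqP-> /eqP->]|].
    by rewrite ae be.
  by rewrite eqxx.
- apply: funext => z.
  by rewrite (sum_ind2 a b (fun x y => (delta x z : R) - delta y z)).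
Qed.

Lemma argmaxB_ge0 (e : {set V}) (h b : V -> R) :
  (0 < #|e|)%N -> argmaxB e h b -> 0 <= dot b h.
Proof.
move=> /card_gt0P [a ae] [_ hmax].
have := hmax _ (pair_inB _ _ _ ae ae).
by rewrite /dot sum_deltaB subrr.
Qed.

Lemma dot_lapform (b : {set V} -> V -> R) (t : {set V} -> R) (h : V -> R) :
  dot (fun z => \sum_(e in E) w e * b e z * t e) h
  = \sum_(e in E) w e * t e * dot (b e) h.
Proof.
rewrite /dot.
under eq_bigr do rewrite mulr_suml.
rewrite exchange_big; apply eq_bigr => e _.
rewrite mulr_sumr; apply eq_bigr => z _; ring.
Qed.

Lemma Lap_mono (h1 h2 u1 u2 : V -> R) :
  Lap E w h1 u1 -> Lap E w h2 u2 ->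
  0 <= dot (fun z => u1 z - u2 z) (fun z => h1 z - h2 z).
Proof.
move=> [b1 [hb1 ->]] [b2 [hb2 ->]].
set U1 := (fun z => \sum_(e in E) w e * b1 e z * dot (b1 e) h1).
set U2 := (fun z => \sum_(e in E) w e * b2 e z * dot (b2 e) h2).
have -> : dot (fun z => U1 z - U2 z) (fun z => h1 z - h2 z)
   = (dot U1 h1 - dot U1 h2) - (dot U2 h1 - dot U2 h2).
  by rewrite /dot -!sumrB; apply eq_bigr => z _; ring.
rewrite /U1 /U2 !dot_lapform -!sumrB.
apply: sumr_ge0 => e eE.
have [_ m1] := hb1 e eE; have [_ m2] := hb2 e eE.
have [ib1 _] := hb1 e eE; have [ib2 _] := hb2 e eE.
have t1 := argmaxB_ge0 _ _ _ (hE _ eE) (hb1 e eE).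
have t2 := argmaxB_ge0 _ _ _ (hE _ eE) (hb2 e eE).
have a1 := m2 _ ib1. have a2 := m1 _ ib2.
have we := hw _ eE.
set T1 := dot (b1 e) h1 in t1 a2 *; set T2 := dot (b2 e) h2 in t2 a1 *.
set A := dot (b1 e) h2 in a1 *; set B := dot (b2 e) h1 in a2 *.
have : 0 <= (T1 - T2) ^+ 2 by apply: sqr_ge0.
move=> sq.
have : 0 <= T1 * (T2 - A) + T2 * (T1 - B) + (T1 - T2) ^+ 2.
  apply: addr_ge0 => //; apply: addr_ge0; apply: mulr_ge0 => //; by rewrite subr_ge0.
move=> H.
have -> : w e * T1 * T1 - w e * T1 * A - (w e * T2 * B - w e * T2 * T2)
        = w e * (T1 * (T2 - A) + T2 * (T1 - B) + (T1 - T2) ^+ 2) by ring.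
by apply: mulr_ge0 => //; apply: ltW.
Qed.

End Alg.

End Part1.
Import Part1.

Module Part2.

Section Inner.
Context {R : realType} {V : finType}.
Variables (E : {set {set V}}) (w : {set V} -> R).
Hypothesis hE : forall e, e \in E -> (0 < #|e|)%N.
Hypothesis hw : forall e, e \in E -> 0 < w e.
Hypothesis hd : forall x : V, 0 < deg E w x.
Local Notation d := (deg E w).
Local Notation inner := (inner E w).

Lemma inner_dot (a b : V -> R) : inner a b = dot a (fun z => b z / d z).
Proof. by rewrite /inner /dot; apply eq_bigr => z _; rewrite mulrA. Qed.

Lemma NLap_mono (g1 g2 u1 u2 : V -> R) :
  NLap E w g1 u1 -> NLap E w g2 u2 ->
  0 <= inner (fun z => u1 z - u2 z) (fun z => g1 z - g2 z).
Proof.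
move=> h1 h2; have := @Lap_mono _ _ E w hE hw _ _ _ _ h1 h2.
rewrite inner_dot /dot => H; apply: (le_trans H) => {H}.
have -> : \sum_x (u1 x - u2 x) * (g1 x / d x - g2 x / d x) = \sum_x (u1 x - u2 x) * ((g1 x - g2 x) / d x).
  by apply eq_bigr => z _; rewrite (mulrBl (d z)^-1).
by [].
Qed.

Lemma innerC (a b : V -> R) : inner a b = inner b a.
Proof. by rewrite /Defs.inner; apply eq_bigr => z _; rewrite (mulrC (a z)). Qed.

Lemma inner_ge0 (a : V -> R) : 0 <= inner a a.
Proof.
apply: sumr_ge0 => z _; apply: divr_ge0; first by rewrite -expr2 sqr_ge0.
exact: ltW.
Qed.

Lemma CS (a b : V -> R) : inner a b ^+ 2 <= inner a a * inner b b.
Proof.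
rewrite -subr_ge0.
pose X z z' := a z ^+ 2 / d z * (b z' ^+ 2 / d z').
pose Z z z' := (a z * b z / d z) * (a z' * b z' / d z').
have e1 : inner a a * inner b b = \sum_z \sum_z' X z z'.
  rewrite /Defs.inner mulr_suml; apply eq_bigr => z _; rewrite mulr_sumr.
  by apply eq_bigr => z' _; rewrite /X !expr2.
have e2 : inner a b ^+ 2 = \sum_z \sum_z' Z z z'.
  rewrite expr2 /Defs.inner mulr_suml; apply eq_bigr => z _; rewrite mulr_sumr.
  by apply eq_bigr => z' _; rewrite /Z.
have e3 : \sum_z \sum_z' (a z * b z' - a z' * b z) ^+ 2 / (d z * d z')
   = \sum_z \sum_z' X z z' + \sum_z \sum_z' X z z' - 2 * \sum_z \sum_z' Z z z'.
  rewrite [X in _ = _ + X - _]exchange_big /= mulr_sumr -!big_split -sumrB /=.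
  apply eq_bigr => z _; rewrite mulr_sumr -!big_split -sumrB /=.
  apply eq_bigr => z' _; rewrite /X /Z invfM; ring.
have H : 0 <= \sum_z \sum_z' (a z * b z' - a z' * b z) ^+ 2 / (d z * d z').
  apply: sumr_ge0 => z _; apply: sumr_ge0 => z' _; apply: divr_ge0.
    exact: sqr_ge0.
  by apply: mulr_ge0; apply: ltW.
rewrite e1 e2; rewrite e3 in H; lra.
Qed.

Lemma CS_abs (a b : V -> R) :
  `|inner a b| <= Num.sqrt (inner a a) * Num.sqrt (inner b b).
Proof.
rewrite -sqrtrM ?inner_ge0 // -sqrtr_sqr ler_sqrt; last first.
  by apply: mulr_ge0; apply: inner_ge0.
exact: CS.
Qed.

End Inner.

End Part2.
Import Part2.

Module Part3.

Section Exist.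
Context {R : realType} {V : finType}.
Variables (E : {set {set V}}) (w : {set V} -> R).
Hypothesis hE : forall e, e \in E -> (0 < #|e|)%N.
Hypothesis hw : forall e, e \in E -> 0 < w e.
Hypothesis hd : forall x : V, 0 < deg E w x.
Local Notation d := (deg E w).
Variables (lam : R) (f : V -> R).
Hypothesis hlam : 0 < lam.

Local Notation Ity := ({set V} * V * V)%type.

Definition qq (a : Ity -> R) (e : {set V}) (x y : V) : R :=
  ((x \in e) && (y \in e))%:R * a ((e, x), y).

Definition vxy (x y z : V) : R := delta x z - delta y z.

Definition yv (a : Ity -> R) (z : V) : R :=
  \sum_(e in E) w e * \sum_x \sum_y qq a e x y * vxy x y z.

Definition sv (a : Ity -> R) (e : {set V}) : R := \sum_x \sum_y qq a e x y.

Definition rv (a : Ity -> R) (z : V) : R := f z + (- lam) * yv a z.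

Definition GG (a : Ity -> R) : R :=
  2^-1 * \sum_z rv a z * rv a z * (d z)^-1
  + lam * 2^-1 * \sum_(e in E) w e * (sv a e * sv a e).

Definition hv (a : Ity -> R) (z : V) : R := rv a z * (d z)^-1.

Definition upd (a : Ity -> R) (i0 : Ity) (t : R) : Ity -> R :=
  fun i => a i + (i == i0)%:R * t.

Lemma Qlem (a : Ity -> R) (e e0 : {set V}) (x0 y0 : V) (F : V -> V -> R) :
  x0 \in e0 -> y0 \in e0 ->
  \sum_x \sum_y ((x \in e) && (y \in e))%:R * ((((e, x), y) == ((e0, x0), y0))%:R * F x y)
  = (e == e0)%:R * F x0 y0.
Proof.
move=> x0e y0e.
have [eq|ne] := eqVneq e e0.
  subst e; rewrite ?eqxx ?mul1r.
  transitivity (\sum_x \sum_y ((x == x0) && (y == y0))%:R * (((x \in e0) && (y \in e0))%:R * F x y)).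
    apply eq_bigr => x _; apply eq_bigr => y _.
    rewrite !xpair_eqE eqxx /=; ring.
  by rewrite (sum_ind2 x0 y0 (fun x y => ((x \in e0) && (y \in e0))%:R * F x y)) x0e y0e mul1r.
rewrite (_ : false%:R = 0) // mul0r; apply: big1 => x _; apply: big1 => y _.
by rewrite !xpair_eqE (negbTE ne) /= mul0r mulr0.
Qed.

Lemma Q2lem (e0 : {set V}) (Y : {set V} -> R) :
  e0 \in E -> \sum_(e in E) w e * ((e == e0)%:R * Y e) = w e0 * Y e0.
Proof.
move=> e0E; rewrite (bigD1 e0) //= eqxx mul1r big1 ?addr0 // => e /andP [_ ne].
by rewrite (negbTE ne) mul0r mulr0.
Qed.

Section Pert.
Variables (a : Ity -> R) (e0 : {set V}) (x0 y0 : V).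
Hypotheses (e0E : e0 \in E) (x0e : x0 \in e0) (y0e : y0 \in e0).
Let i0 : Ity := ((e0, x0), y0).

Lemma sv_upd t e : sv (upd a i0 t) e = sv a e + (e == e0)%:R * t.
Proof.
rewrite /sv /upd -(Qlem a e e0 x0 y0 (fun _ _ => t) x0e y0e) -big_split.
apply eq_bigr => x _; rewrite -big_split; apply eq_bigr => y _.
rewrite /qq /=; ring.
Qed.

Lemma yv_upd t z : yv (upd a i0 t) z = yv a z + w e0 * (t * vxy x0 y0 z).
Proof.
rewrite /yv -(Q2lem e0 (fun e => t * vxy x0 y0 z) e0E) -big_split.
apply eq_bigr => e _ /=; rewrite -mulrDr; congr (_ * _).
rewrite -(Qlem a e e0 x0 y0 (fun x y => t * vxy x y z) x0e y0e) -big_split.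
apply eq_bigr => x _; rewrite -big_split; apply eq_bigr => y _.
rewrite /qq /upd /=; ring.
Qed.

Lemma quad_exp (F v : V -> R) (k : R) :
  \sum_z (F z + k * v z) * (F z + k * v z) * (d z)^-1
  = \sum_z F z * F z * (d z)^-1 + 2 * k * \sum_z v z * (F z * (d z)^-1)
    + k ^+ 2 * \sum_z v z * v z * (d z)^-1.
Proof. rewrite !mulr_sumr -!big_split; apply eq_bigr => z _ /=; ring. Qed.

Definition kap : R :=
  ((lam * w e0) ^+ 2 * \sum_z vxy x0 y0 z * vxy x0 y0 z * (d z)^-1 + lam * w e0) / 2.

Lemma kap_ge0 : 0 <= kap.
Proof.
apply: divr_ge0 => //; apply: addr_ge0.
  apply: mulr_ge0; first exact: sqr_ge0.
  apply: sumr_ge0 => z _; apply: mulr_ge0; first by rewrite -expr2 sqr_ge0.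
  by rewrite invr_ge0 ltW.
by apply: mulr_ge0; apply: ltW => //; apply: hw.
Qed.

Lemma GG_upd t :
  GG (upd a i0 t) = GG a + t * (lam * w e0 * (sv a e0 - (hv a x0 - hv a y0)))
                    + t ^+ 2 * kap.
Proof.
have er : forall z, rv (upd a i0 t) z = rv a z + (- (lam * w e0 * t)) * vxy x0 y0 z.
  move=> z; rewrite /rv yv_upd; ring.
have es : forall e, e \in E -> w e * (sv (upd a i0 t) e * sv (upd a i0 t) e)
   = w e * (sv a e * sv a e) + w e * ((e == e0)%:R * (2 * t * sv a e + t ^+ 2)).
  move=> e _; rewrite sv_upd.
  have [->|ne] := eqVneq e e0; rewrite ?eqxx ?mul1r; last by rewrite (_ : false%:R = 0) //; ring.
  ring.
rewrite /GG (eq_bigr _ (fun z _ => congr1 (fun u => u * u * (d z)^-1) (er z))).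
rewrite quad_exp (eq_bigr _ es) big_split /= Q2lem //.
have -> : \sum_z vxy x0 y0 z * (rv a z * (d z)^-1) = hv a x0 - hv a y0.
  by rewrite -sum_deltaB; apply eq_bigr => z _.
by rewrite /kap; field.
Qed.

End Pert.

End Exist.

End Part3.
Import Part3.

Module Part4.

Lemma dir_lemma {R : realType} (A B t0 : R) : 0 < t0 -> 0 <= B ->
  (forall t, 0 < t -> t <= t0 -> 0 <= t * A + t ^+ 2 * B) -> 0 <= A.
Proof.
move=> t0p Bp H; rewrite leNgt; apply/negP => An.
pose t := Num.min t0 (- A / (B + 1)).
have B1 : 0 < B + 1 by lra.
have tp : 0 < t by rewrite lt_min t0p /= divr_gt0 // oppr_gt0.
have tt0 : t <= t0 by rewrite ge_min lexx.
have tA : t * (B + 1) <= - A.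
  by rewrite -ler_pdivlMr // ge_min lexx orbT.
have := H t tp tt0; rewrite expr2 => H2.
nra.
Qed.

Section Exist2.
Context {R : realType} {V : finType}.
Variables (E : {set {set V}}) (w : {set V} -> R).
Hypothesis hE : forall e, e \in E -> (0 < #|e|)%N.
Hypothesis hw : forall e, e \in E -> 0 < w e.
Hypothesis hd : forall x : V, 0 < deg E w x.
Local Notation d := (deg E w).
Variables (lam : R) (f : V -> R).
Hypothesis hlam : 0 < lam.
Local Notation Ity := ({set V} * V * V)%type.
Local Notation GG := (GG E w lam f).
Local Notation sv := (sv (V:=V)).
Local Notation hv := (hv E w lam f).
Local Notation yv := (yv E w).
Local Notation rv := (rv E w lam f).

Lemma qq_ge0 (a : Ity -> R) e x y : (forall i, 0 <= a i) -> 0 <= qq a e x y.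
Proof. by move=> ha; apply: mulr_ge0 => //; rewrite ler0n. Qed.

Lemma le_sum_term (T : finType) (F : T -> R) (i : T) :
  (forall j, 0 <= F j) -> F i <= \sum_j F j.
Proof.
move=> hF; rewrite (bigD1 i) //= lerDl.
by apply: sumr_ge0 => j _.
Qed.

Lemma qq_le_sv (a : Ity -> R) e x y : (forall i, 0 <= a i) -> qq a e x y <= sv a e.
Proof.
move=> ha; rewrite /Part3.sv.
apply: (@le_trans _ _ (\sum_y qq a e x y)).
  by apply: le_sum_term => j; exact: qq_ge0.
have := le_sum_term _ (fun x => \sum_y qq a e x y) x; apply.
by move=> j; apply: sumr_ge0 => k _; exact: qq_ge0.
Qed.

Lemma GG_ge0 (a : Ity -> R) : 0 <= GG a.
Proof.
rewrite /Part3.GG; apply: addr_ge0.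
  apply: mulr_ge0; first by rewrite invr_ge0.
  apply: sumr_ge0 => z _; apply: mulr_ge0; first by rewrite -expr2 sqr_ge0.
  by rewrite invr_ge0 ltW.
apply: mulr_ge0; first by apply: mulr_ge0; [apply: ltW | rewrite invr_ge0].
apply: sumr_ge0 => e eE; apply: mulr_ge0; first exact: ltW (hw _ eE).
by rewrite -expr2 sqr_ge0.
Qed.

Lemma le_sum_in (T : finType) (P : {set T}) (F : T -> R) (i : T) :
  i \in P -> (forall j, j \in P -> 0 <= F j) -> F i <= \sum_(j in P) F j.
Proof.
move=> iP hF; rewrite (bigD1 i) //= lerDl.
by apply: sumr_ge0 => j /andP [jP _]; apply: hF.
Qed.

Lemma GG_lb (a : Ity -> R) e0 : e0 \in E ->
  lam * 2^-1 * (w e0 * (sv a e0 * sv a e0)) <= GG a.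
Proof.
move=> e0E.
have S : w e0 * (sv a e0 * sv a e0) <= \sum_(e in E) w e * (sv a e * sv a e).
  apply: (le_sum_in _ E (fun e => w e * (sv a e * sv a e))) => // e eE.
  by apply: mulr_ge0; [exact: ltW (hw _ eE) | rewrite -expr2 sqr_ge0].
have A : 0 <= 2^-1 * \sum_z rv a z * rv a z * (d z)^-1.
  apply: mulr_ge0; first by rewrite invr_ge0.
  apply: sumr_ge0 => z _; apply: mulr_ge0; first by rewrite -expr2 sqr_ge0.
  by rewrite invr_ge0 ltW.
rewrite /Part3.GG; apply: (@le_trans _ _ (lam * 2^-1 * \sum_(e in E) w e * (sv a e * sv a e))).
  by rewrite ler_pM2l // mulr_gt0 // invr_gt0.
by rewrite lerDr.
Qed.

Definition G0 := GG (fun _ => 0).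
Definition CC := 1 + \sum_(e in E) 2 * G0 / (lam * w e).

Lemma CC_ge1 : 1 <= CC.
Proof.
rewrite /CC lerDl; apply: sumr_ge0 => e eE; apply: divr_ge0.
  by apply: mulr_ge0 => //; apply: GG_ge0.
by apply: mulr_ge0; apply: ltW => //; apply: hw.
Qed.

Lemma CC_bound e0 : e0 \in E -> G0 < lam * 2^-1 * (w e0 * (CC * CC)).
Proof.
move=> e0E.
have wp := hw _ e0E.
have G0p : 0 <= G0 by apply: GG_ge0.
set T := 2 * G0 / (lam * w e0).
have lwp : 0 < lam * w e0 by apply: mulr_gt0.
have TE : lam * w e0 * T = 2 * G0 by rewrite /T mulrC divfK // gt_eqF.
have Tle : T <= \sum_(e in E) 2 * G0 / (lam * w e).
  rewrite (bigD1 e0) //= lerDl; apply: sumr_ge0 => e /andP [eE _].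
  apply: divr_ge0; first by apply: mulr_ge0.
  by apply: mulr_ge0; apply: ltW => //; apply: hw.
have C1 := CC_ge1.
have CT : T < CC by rewrite /CC; lra.
have : lam * w e0 * T < lam * w e0 * (CC * CC).
  rewrite ltr_pM2l //; apply: (lt_le_trans CT).
  by rewrite -{1}(mulr1 CC) ler_pM2l //; lra.
rewrite TE => H.
have -> : lam * 2^-1 * (w e0 * (CC * CC)) = (lam * w e0 * (CC * CC)) / 2 by field.
lra.
Qed.

Section KKT.
Variable p : Ity -> R.
Hypothesis pbox : forall i, 0 <= p i <= CC.
Hypothesis pmin : forall a : Ity -> R, (forall i, 0 <= a i <= CC) -> GG p <= GG a.

Lemma p_ge0 i : 0 <= p i.
Proof. by case/andP: (pbox i). Qed.

Lemma p_lt_CC e0 x0 y0 : e0 \in E -> x0 \in e0 -> y0 \in e0 -> p ((e0, x0), y0) < CC.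
Proof.
move=> e0E x0e y0e; rewrite ltNge; apply/negP => Cle.
have h1 : CC <= sv p e0.
  apply: (le_trans Cle); have := qq_le_sv p e0 x0 y0 p_ge0.
  by rewrite /qq x0e y0e mul1r.
have C1 := CC_ge1.
have h2 : CC * CC <= sv p e0 * sv p e0 by apply: ler_pM => //; lra.
have h3 : lam * 2^-1 * (w e0 * (CC * CC)) <= lam * 2^-1 * (w e0 * (sv p e0 * sv p e0)).
  rewrite ler_pM2l ?mulr_gt0 ?invr_gt0 //.
  by rewrite ler_pM2l //; apply: hw.
have H0 : GG p <= G0.
  apply: pmin => i; rewrite lexx /=; have := CC_ge1; lra.
have := GG_lb p e0 e0E; have := CC_bound e0 e0E; lra.
Qed.


Lemma KKT1 e0 x0 y0 : e0 \in E -> x0 \in e0 -> y0 \in e0 ->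
  hv p x0 - hv p y0 <= sv p e0.
Proof.
move=> e0E x0e y0e.
set A := lam * w e0 * (sv p e0 - (hv p x0 - hv p y0)).
have wp := hw _ e0E.
suff : 0 <= A.
  by rewrite /A pmulr_rge0 ?mulr_gt0 // subr_ge0.
apply: (dir_lemma _ (kap E w lam e0 x0 y0) (CC - p ((e0, x0), y0))).
- by rewrite subr_gt0; apply: p_lt_CC.
- exact: kap_ge0.
move=> t tp tle.
have H : GG p <= GG (upd p ((e0, x0), y0) t).
  apply: pmin => i; rewrite /upd; have [->|_] := eqVneq i ((e0, x0), y0).
    rewrite mul1r; have := p_ge0 ((e0, x0), y0) => ?; apply/andP; split; lra.
  by rewrite mul0r addr0; apply: pbox.
rewrite (GG_upd _ _ _ _ _ _ _ _ e0E x0e y0e) in H; rewrite /A; lra.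
Qed.

Lemma KKT2 e0 x0 y0 : e0 \in E -> x0 \in e0 -> y0 \in e0 ->
  0 < p ((e0, x0), y0) -> sv p e0 <= hv p x0 - hv p y0.
Proof.
move=> e0E x0e y0e pp.
set A := lam * w e0 * (sv p e0 - (hv p x0 - hv p y0)).
have wp := hw _ e0E.
suff : 0 <= - A.
  by rewrite /A oppr_ge0 pmulr_rle0 ?mulr_gt0 // subr_le0.
apply: (dir_lemma _ (kap E w lam e0 x0 y0) (p ((e0, x0), y0))) => //.
- exact: kap_ge0.
move=> t tp tle.
have H : GG p <= GG (upd p ((e0, x0), y0) (- t)).
  apply: pmin => i; rewrite /upd; have [->|_] := eqVneq i ((e0, x0), y0).
    rewrite mul1r; have := pbox ((e0, x0), y0); move/andP => [h1 h2].
    apply/andP; split; lra.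
  by rewrite mul0r addr0; apply: pbox.
rewrite (GG_upd _ _ _ _ _ _ _ _ e0E x0e y0e) sqrrN in H; rewrite /A; lra.
Qed.

Definition bsv (e : {set V}) : V -> R :=
  if 0 < sv p e then (fun z => \sum_x \sum_y (qq p e x y / sv p e) * (delta x z - delta y z))
  else (fun _ => 0).

Lemma qq_supp e x y : qq p e x y != 0 -> (x \in e) && (y \in e).
Proof. by rewrite /qq; case: ((x \in e) && (y \in e)); rewrite ?mul0r ?eqxx. Qed.

Lemma qq_pos e x y : qq p e x y != 0 -> 0 < p ((e, x), y).
Proof.
move=> hq; have H := qq_supp _ _ _ hq; move: hq; rewrite /qq H mul1r => hq.
by rewrite lt_def hq p_ge0.
Qed.

Lemma sv_ge0 e : 0 <= sv p e.
Proof. by apply: sumr_ge0 => x _; apply: sumr_ge0 => y _; apply: qq_ge0; exact: p_ge0. Qed.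

Lemma bsv_dot_pos e : e \in E -> 0 < sv p e -> dot (bsv e) (hv p) = sv p e.
Proof.
move=> eE sp; rewrite /bsv sp dot_inB.
transitivity (\sum_x \sum_y qq p e x y).
  apply eq_bigr => x _; apply eq_bigr => y _.
  have [q0|qn] := eqVneq (qq p e x y) 0; first by rewrite q0 !mul0r.
  have /andP [xe ye] := qq_supp _ _ _ qn.
  have -> : hv p x - hv p y = sv p e.
    apply/eqP; rewrite eq_le KKT1 //= KKT2 //; exact: qq_pos.
  by rewrite divfK // gt_eqF.
by [].
Qed.

Lemma bsv_argmax e : e \in E -> argmaxB e (hv p) (bsv e).
Proof.
move=> eE.
have [sp|sn] := boolP (0 < sv p e).
  split.
    exists (fun x y => qq p e x y / sv p e); split.
    - by move=> x y; apply: divr_ge0; [apply: qq_ge0; exact: p_ge0 | exact: ltW].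
    - have -> : \sum_x \sum_y qq p e x y / sv p e = sv p e / sv p e.
        by rewrite /Part3.sv mulr_suml; apply eq_bigr => x _; rewrite mulr_suml.
      by rewrite divff // gt_eqF.
    - move=> x y; have [->|qn] := eqVneq (qq p e x y) 0; first by rewrite mul0r eqxx.
      by move=> _; apply: qq_supp.
    - by rewrite /bsv sp.
  move=> b' hb'; rewrite bsv_dot_pos //.
  by apply: (inB_le _ _ _ _ hb') => x y xe ye; apply: KKT1.
have s0 : sv p e = 0 by apply/eqP; rewrite eq_le sv_ge0 andbT leNgt.
have bz : bsv e = (fun _ => 0) by rewrite /bsv (negbTE sn).
rewrite bz.
have [a ae] : exists a, a \in e by apply/card_gt0P; apply: hE.
split.
  have -> : (fun _ : V => 0 : R) = (fun z => (delta a z : R) - delta a z).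
    by apply: funext => z; rewrite subrr.
  exact: pair_inB.
move=> b' hb'; have -> : dot (fun _ : V => 0 : R) (hv p) = 0.
  by rewrite /dot big1 // => z _; rewrite mul0r.
by apply: (inB_le _ _ _ _ hb') => x y xe ye; rewrite -s0; apply: KKT1.
Qed.

Lemma res_exists_p : exists g, is_resolvent E w lam f g.
Proof.
exists (rv p); exists (yv p); split; last first.
  by apply: funext => z; rewrite /Part3.rv; ring.
exists bsv; split; first exact: bsv_argmax.
apply: funext => z; rewrite /Part3.yv; apply eq_bigr => e eE.
have [sp|sn] := boolP (0 < sv p e).
  rewrite (bsv_dot_pos e eE sp) -mulrA; congr (w e * _).
  rewrite /bsv sp mulr_suml; apply eq_bigr => x _; rewrite mulr_suml.
  apply eq_bigr => y _; rewrite /vxy; field; by rewrite gt_eqF.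
have s0 : sv p e = 0 by apply/eqP; rewrite eq_le sv_ge0 andbT leNgt.
have q0 : forall x y, qq p e x y = 0.
  move=> x y; apply/le_anti/andP; split; [rewrite -s0; apply: qq_le_sv | apply: qq_ge0]; exact: p_ge0.
rewrite /bsv (negbTE sn) mulr0 mul0r big1 ?mulr0 // => x _.
by apply: big1 => y _; rewrite q0 mul0r.
Qed.
End KKT.
End Exist2.

End Part4.
Import Part4.

Module Part5.
Import topology normedtype derive.
Import ArrowAsProduct.
Import numFieldNormedType.Exports.
Local Open Scope classical_set_scope.

Section Topo.
Context {R : realType} {I : finType}.
Local Notation T := (I -> R).

Lemma cont_add (F G : T -> R) : continuous F -> continuous G -> continuous (fun a => F a + G a).
Proof. by move=> cF cG x; exact: (continuousD (cF x) (cG x)). Qed.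

Lemma cont_mul (F G : T -> R) : continuous F -> continuous G -> continuous (fun a => F a * G a).
Proof. by move=> cF cG x; exact: (continuousM (cF x) (cG x)). Qed.

Lemma cont_cst (c : R) : continuous (fun _ : T => c).
Proof. exact: cst_continuous. Qed.

Lemma cont_proj (i : I) : continuous (fun a : T => a i).
Proof. exact: (@proj_continuous I (fun _ => R) i). Qed.

Lemma cont_sum (J : Type) (r : seq J) (P : pred J) (F : J -> T -> R) :
  (forall j, continuous (F j)) -> continuous (fun a => \sum_(j <- r | P j) F j a).
Proof.
move=> cF; elim: r => [|j r IH].
  have -> : (fun a : T => \sum_(j <- [::] | P j) F j a) = (fun _ => 0).
    by apply: funext => a; rewrite big_nil.
  exact: cont_cst.
have -> : (fun a : T => \sum_(j0 <- j :: r | P j0) F j0 a)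
   = (fun a => if P j then F j a + \sum_(j0 <- r | P j0) F j0 a else \sum_(j0 <- r | P j0) F j0 a).
  by apply: funext => a; rewrite big_cons.
case: (P j) => //.
exact: cont_add.
Qed.

End Topo.

Ltac cont_tac := repeat (first [ exact: cont_cst | exact: cont_proj | apply: cont_add | apply: cont_mul | apply: cont_sum => ? ]).

Section Min.
Context {R : realType} {V : finType}.
Variables (E : {set {set V}}) (w : {set V} -> R).
Hypothesis hE : forall e, e \in E -> (0 < #|e|)%N.
Hypothesis hw : forall e, e \in E -> 0 < w e.
Hypothesis hd : forall x : V, 0 < deg E w x.
Variables (lam : R) (f : V -> R).
Hypothesis hlam : 0 < lam.
Local Notation Ity := ({set V} * V * V)%type.

Lemma GG_cont : continuous (GG E w lam f : (Ity -> R) -> R).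
Proof.
rewrite /GG /rv /yv /sv /qq /vxy.
cont_tac.
Qed.

Lemma min_exists : exists p : Ity -> R, (forall i, 0 <= p i <= CC E w lam f) /\
  (forall a, (forall i, 0 <= a i <= CC E w lam f) -> GG E w lam f p <= GG E w lam f a).
Proof.
set C := CC E w lam f.
have C0 : 0 <= C by apply: le_trans (@CC_ge1 _ _ E w hw hd lam f hlam).
have cK := @tychonoff Ity (fun _ => R) (fun _ => `[0, C]%classic) (fun i => @segment_compact R 0 C).
have ne : [set a : Ity -> R | forall i, `[0, C]%classic (a i)] !=set0.
  by exists (fun _ => 0) => i /=; rewrite in_itv /= lexx C0.
have cG : {within [set a : Ity -> R | forall i, `[0, C]%classic (a i)], continuous (GG E w lam f)}.
  by apply: continuous_subspaceT; exact: GG_cont.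
have [p pK pmin] := compact_EVT_min ne cK cG.
exists p; split.
  move=> i; move: pK; rewrite inE /= => /(_ i).
  by rewrite in_itv.
move=> a ha; apply: pmin; rewrite inE /= => i.
by rewrite in_itv; apply: ha.
Qed.

End Min.

End Part5.
Import Part5.

Module Part6.
Import ClassicalEpsilon.
Local Open Scope classical_set_scope.

Lemma sup_close {R : realType} (A : Type) (P : A -> Prop) (g1 g2 : A -> R) (K B1 B2 : R) (a0 : A) :
  P a0 -> (forall a, P a -> g1 a <= B1) -> (forall a, P a -> g2 a <= B2) ->
  (forall a, P a -> `|g1 a - g2 a| <= K) ->
  `|sup [set r | exists a, P a /\ r = g1 a] - sup [set r | exists a, P a /\ r = g2 a]| <= K.
Proof.
move=> Pa0 hb1 hb2 hK.
have ne1 : [set r | exists a, P a /\ r = g1 a] !=set0 by exists (g1 a0); exists a0.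
have ne2 : [set r | exists a, P a /\ r = g2 a] !=set0 by exists (g2 a0); exists a0.
have hs1 : has_sup [set r | exists a, P a /\ r = g1 a].
  split => //; exists B1 => r [a [Pa ->]]; exact: hb1.
have hs2 : has_sup [set r | exists a, P a /\ r = g2 a].
  split => //; exists B2 => r [a [Pa ->]]; exact: hb2.
have l1 : sup [set r | exists a, P a /\ r = g1 a] <= sup [set r | exists a, P a /\ r = g2 a] + K.
  apply: ge_sup => // r [a [Pa ->]].
  have := sup_upper_bound hs2 (ex_intro _ a (conj Pa erefl)).
  have := hK a Pa; rewrite ler_norml => /andP [h1 h2]; lra.
have l2 : sup [set r | exists a, P a /\ r = g2 a] <= sup [set r | exists a, P a /\ r = g1 a] + K.
  apply: ge_sup => // r [a [Pa ->]].
  have := sup_upper_bound hs1 (ex_intro _ a (conj Pa erefl)).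
  have := hK a Pa; rewrite ler_norml => /andP [h1 h2]; lra.
rewrite ler_norml; apply/andP; split; lra.
Qed.

Lemma exists_max {R : realType} (T : finType) (P : {pred T}) (F : T -> R) (i0 : T) :
  P i0 -> exists2 i, P i & forall j, P j -> F j <= F i.
Proof.
move=> Pi0; case: (@arg_maxP _ _ _ i0 P F Pi0) => i Pi Hi.
by exists i => // j /Hi.
Qed.

Lemma bigmax_ge {R : realType} {V : finType} (r : seq V) (F : V -> R) z :
  z \in r -> F z <= \big[Num.max/0]_(i <- r) F i.
Proof.
elim: r => // a r IH; rewrite inE big_cons => /orP [/eqP->|zr].
  by rewrite le_max lexx.
by rewrite le_max IH ?orbT.
Qed.

End Part6.
Import Part6.

Module Part7.
Import ClassicalEpsilon.

Section Main.
Context {R : realType} {V : finType}.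
Variables (E : {set {set V}}) (w : {set V} -> R).
Hypothesis hE : forall e, e \in E -> (0 < #|e|)%N.
Hypothesis hw : forall e, e \in E -> 0 < w e.
Hypothesis hd : forall x : V, 0 < deg E w x.
Local Notation d := (deg E w).
Local Notation inner := (inner E w).
Local Notation M := (Mconst E w).

Lemma res_spec lam f : 0 < lam -> is_resolvent E w lam f (resolvent E w lam f).
Proof.
move=> hl; apply: epsilon_spec.
have [p [pb pm]] := min_exists E w hw hd lam f hl.
exact: (res_exists_p E w hE hw hd lam f hl p pb pm).
Qed.

Lemma M_ge z : (Num.sqrt (d z))^-1 <= M.
Proof. rewrite /Mconst; apply: bigmax_ge; exact: mem_index_enum. Qed.

Lemma M_ge0 : 0 <= M.
Proof.
rewrite /Mconst; elim: (index_enum V) => [|a r IH]; first by rewrite big_nil.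
by rewrite big_cons le_max IH orbT.
Qed.

Lemma invd_le z : (d z)^-1 <= M ^+ 2.
Proof.
have hs : 0 < Num.sqrt (d z) by rewrite sqrtr_gt0.
have -> : (d z)^-1 = ((Num.sqrt (d z))^-1) ^+ 2.
  by rewrite exprVn sqr_sqrtr // ltW.
rewrite !expr2; apply: ler_pM; rewrite ?invr_ge0 ?sqrtr_ge0 //; exact: M_ge.
Qed.

Lemma inner_delta (g : V -> R) x y :
  inner g (fun z => delta x z - delta y z) = g x / d x - g y / d y.
Proof.
rewrite /Defs.inner -(sum_deltaB x y (fun z => g z / d z)).
by apply eq_bigr => z _; ring.
Qed.

Lemma inner_dd x y :
  inner (fun z => delta x z - delta y z) (fun z => delta x z - delta y z) <= (2 * M) ^+ 2.
Proof.
rewrite inner_delta exprMn.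
have m2 : 0 <= M ^+ 2 by apply: sqr_ge0.
have [->|nxy] := eqVneq x y.
  by rewrite !subrr; apply: mulr_ge0; apply: sqr_ge0.
rewrite /= /delta !eqxx (negbTE nxy) eq_sym (negbTE nxy) /=.
have := invd_le x; have := invd_le y.
rewrite (_ : (2:R) ^+ 2 = 4); last by rewrite expr2; lra.
rewrite (_ : (true%:R : R) = 1) // (_ : (false%:R : R) = 0) //.
lra.
Qed.

Lemma sqrt_dd x y :
  Num.sqrt (inner (fun z => delta x z - delta y z) (fun z => delta x z - delta y z)) <= 2 * M.
Proof.
have hM : 0 <= 2 * M by rewrite mulr_ge0 ?M_ge0.
rewrite -(ger0_norm hM) -sqrtr_sqr ler_sqrt ?sqr_ge0 //; exact: inner_dd.
Qed.

Lemma vol_ge0 : 0 <= vol E w.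
Proof. by apply: sumr_ge0 => z _; apply: ltW. Qed.


Lemma dist_le1 e a b : e \in E -> a \in e -> b \in e -> (dist E a b <= 1)%N.
Proof.
move=> eE ae be.
have w1 : walk E a b 1.
  apply/existsP; exists [tuple b]; rewrite /= andbT eqxx andbT.
  by apply/existsP; exists e; rewrite eE ae be.
rewrite /dist; case: pselect => [h|hn]; last by exfalso; apply: hn; exists 1%N.
by case: ex_minnP => m _ /(_ 1%N w1).
Qed.

Lemma b2R_t : (true%:R : R) = 1. Proof. by []. Qed.
Lemma b2R_f : (false%:R : R) = 0. Proof. by []. Qed.

Lemma delta_diff_le (a c z : V) (e : {set V}) : a \in e -> c \in e ->
  `|(delta a z : R) - delta c z| <= (z \in e)%:R.
Proof.
move=> ae ce; rewrite /delta.
have [->|za] := eqVneq z a.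
  rewrite ae b2R_t; case: (a == c); rewrite ?b2R_t ?b2R_f ?subrr ?normr0 ?subr0 ?normr1 //.
have [->|zc] := eqVneq z c.
  by rewrite ce !b2R_t b2R_f add0r normrN normr1.
by rewrite !b2R_f subrr normr0 ler0n.
Qed.

Lemma u0_exists f : lip1 E w f -> exists u0, NLap E w f u0 /\ inner u0 u0 <= vol E w.
Proof.
move=> hf.
pose h := fun z => f z / d z.
have hb : forall e, exists b : V -> R, e \in E -> argmaxB e h b /\
     exists a c, [/\ a \in e, c \in e & b = (fun z => delta a z - delta c z)].
  move=> e; have [eE|eN] := boolP (e \in E); last by exists (fun _ => 0).
  have [a0 a0e] : exists a, a \in e by apply/card_gt0P; apply: hE.
  have [[a c] /= /andP [ae ce] hmax] := exists_max _ [pred p : V * V | (p.1 \in e) && (p.2 \in e)]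
      (fun p : V * V => h p.1 - h p.2) (a0, a0) (introT andP (conj a0e a0e)).
  exists (fun z => delta a z - delta c z) => _; split; last by exists a, c.
  split; first exact: pair_inB.
  move=> b' hb'; rewrite /dot sum_deltaB.
  apply: (inB_le _ _ _ _ hb') => x y xe ye.
  by apply: (hmax (x, y)); rewrite /= xe ye.
have [bs hbs] := choice _ hb.
exists (fun z => \sum_(e in E) w e * bs e z * dot (bs e) h); split.
  exists bs; split => // e eE; by case: (hbs e eE).
rewrite /vol /Defs.inner; apply: ler_sum => z _.
set u := \sum_(e in E) _.
have hu : `|u| <= d z.
  rewrite /deg big_mkcondr /=; apply: (le_trans (ler_norm_sum _ _ _)).
  apply: ler_sum => e eE.
  have [_ [a [c [ae ce ->]]]] := hbs e eE.
  have hwe := hw _ eE.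
  rewrite /dot sum_deltaB !normrM (gtr0_norm hwe).
  have ht : `|h a - h c| <= 1.
    apply: (le_trans (hf a c)); rewrite lern1; exact: (dist_le1 e).
  have hdl := delta_diff_le a c z e ae ce.
  case: (boolP (z \in e)) hdl => zin /= hdl.
    rewrite -[X in _ <= X]mulr1 -mulrA ler_pM2l // -[X in _ <= X]mulr1.
    by apply: ler_pM; rewrite ?normr_ge0.
  by move: hdl; rewrite normr_le0 => /eqP ->; rewrite normr0 mulr0 mul0r.
have hd0 := hd z.
have : u * u <= d z * d z.
  apply: (le_trans (ler_norm _)); rewrite normrM.
  by apply: ler_pM; rewrite ?normr_ge0.
move=> H; apply: (le_trans (ler_wpM2r _ H)); first by rewrite invr_ge0 ltW.
by rewrite mulfK // gt_eqF.
Qed.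

Lemma U_bound lam f g u : 0 < lam -> lip1 E w f -> NLap E w g u ->
  f = (fun z => g z + lam * u z) -> Num.sqrt (inner u u) <= Num.sqrt (vol E w).
Proof.
move=> hl hf hgu hfe.
have hfz : forall z, f z = g z + lam * u z by move=> z; rewrite hfe.
have [u0 [hu0 hu0b]] := u0_exists f hf.
have mono := NLap_mono E w hE hw _ _ _ _ hgu hu0.
have eq : inner (fun z => u z - u0 z) (fun z => g z - f z) = - lam * (inner u u - inner u0 u).
  rewrite /Defs.inner -sumrB mulr_sumr; apply eq_bigr => z _; rewrite hfz; ring.
rewrite eq in mono.
have h1 : inner u u <= inner u0 u by nra.
have h2 : inner u0 u <= Num.sqrt (inner u0 u0) * Num.sqrt (inner u u).
  exact: (le_trans (ler_norm _) (CS_abs E w hd _ _)).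
have h3 : Num.sqrt (inner u0 u0) <= Num.sqrt (vol E w) by rewrite ler_sqrt // vol_ge0.
have s0 : 0 <= Num.sqrt (inner u u) := sqrtr_ge0 _.
have ss : Num.sqrt (inner u u) ^+ 2 = inner u u by rewrite sqr_sqrtr // inner_ge0.
have t0 : 0 <= Num.sqrt (inner u0 u0) := sqrtr_ge0 _.
move: ss; set s := Num.sqrt (inner u u); set t := Num.sqrt (inner u0 u0).
set v := Num.sqrt (vol E w) => ss.
rewrite -ss in h1.
have : s ^+ 2 <= v * s.
  apply: (le_trans h1); apply: (le_trans h2); by rewrite ler_wpM2r.
rewrite expr2 => H; have v0 : 0 <= v := sqrtr_ge0 _; nra.
Qed.

Lemma key_bound lam mu f x y : 0 < lam -> 0 < mu -> lip1 E w f ->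
  `|inner (resolvent E w lam f) (fun z => delta x z - delta y z)
    - inner (resolvent E w mu f) (fun z => delta x z - delta y z)|
   <= 2 * M * Num.sqrt (vol E w) * `|lam - mu|.
Proof.
move=> hl hm hf.
have [ul [hul hfl]] := res_spec lam f hl.
have [um [hum hfm]] := res_spec mu f hm.
have hUl := U_bound _ _ _ _ hl hf hul hfl.
move: hul hfl hum hfm hUl.
set gl := resolvent E w lam f; set gm := resolvent E w mu f => hul hfl hum hfm hUl.
set D := (fun z => delta x z - delta y z).
have eD : forall z, gl z - gm z = mu * um z - lam * ul z.
  move=> z; have e1 : f z = gl z + lam * ul z by rewrite {1}hfl.
  have e2 : f z = gm z + mu * um z by rewrite {1}hfm.
  lra.
set Dl := (fun z => gl z - gm z).
set N := inner Dl Dl.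
have eN : N = - mu * inner (fun z => ul z - um z) Dl + (mu - lam) * inner ul Dl.
  rewrite /N /Defs.inner !mulr_sumr -big_split; apply eq_bigr => z _ /=.
  rewrite /Dl {1}eD; ring.
have mono := NLap_mono E w hE hw _ _ _ _ hul hum.
have sN0 : 0 <= Num.sqrt N := sqrtr_ge0 _.
have sU0 : 0 <= Num.sqrt (inner ul ul) := sqrtr_ge0 _.
have cs1 : `|inner ul Dl| <= Num.sqrt (inner ul ul) * Num.sqrt N := CS_abs E w hd _ _.
have b1 : (mu - lam) * inner ul Dl <= `|mu - lam| * (Num.sqrt (inner ul ul) * Num.sqrt N).
  apply: (le_trans (ler_norm _)); rewrite normrM.
  by apply: ler_wpM2l; rewrite ?normr_ge0.
have hN : N <= `|mu - lam| * (Num.sqrt (inner ul ul) * Num.sqrt N).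
  rewrite {1}eN; have : 0 <= mu * inner (fun z => ul z - um z) Dl.
    by apply: mulr_ge0 => //; apply: ltW.
  lra.
have ssN : Num.sqrt N ^+ 2 = N by rewrite sqr_sqrtr // inner_ge0.
have nm0 : 0 <= `|mu - lam| := normr_ge0 _.
have hsN : Num.sqrt N <= `|mu - lam| * Num.sqrt (inner ul ul).
  have hN' : Num.sqrt N * Num.sqrt N <= `|mu - lam| * Num.sqrt (inner ul ul) * Num.sqrt N.
    rewrite -expr2 ssN -mulrA; exact: hN.
  have [a0|ap] := eqVneq (Num.sqrt N) 0.
    by rewrite a0; apply: mulr_ge0.
  have apos : 0 < Num.sqrt N by rewrite lt_def ap sN0.
  by rewrite -(ler_pM2r apos).
have eDiff : inner gl D - inner gm D = inner Dl D.
  by rewrite /Defs.inner -sumrB; apply eq_bigr => z _; rewrite /Dl; ring.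
rewrite eDiff.
have cs2 : `|inner Dl D| <= Num.sqrt N * Num.sqrt (inner D D) := CS_abs E w hd _ _.
have hD := sqrt_dd x y.
have hD0 : 0 <= Num.sqrt (inner D D) := sqrtr_ge0 _.
have v0 : 0 <= Num.sqrt (vol E w) := sqrtr_ge0 _.
have M0 := M_ge0.
apply: (le_trans cs2).
have -> : 2 * M * Num.sqrt (vol E w) * `|lam - mu| = (`|mu - lam| * Num.sqrt (vol E w)) * (2 * M).
  by rewrite distrC; ring.
apply: ler_pM => //.
apply: (le_trans hsN); by apply: ler_wpM2l.
Qed.

Lemma ub_bound lam f x y : 0 < lam -> lip1 E w f ->
  inner (resolvent E w lam f) (fun z => delta x z - delta y z)
  <= (dist E x y)%:R + lam * (Num.sqrt (vol E w) * (2 * M)).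
Proof.
move=> hl hf.
have [ul [hul hfl]] := res_spec lam f hl.
have hUl := U_bound _ _ _ _ hl hf hul hfl.
move: hul hfl hUl; set gl := resolvent E w lam f => hul hfl hUl.
set D := (fun z => delta x z - delta y z).
have hfz : forall z, f z = gl z + lam * ul z by move=> z; rewrite {1}hfl.
have e : inner gl D = inner f D - lam * inner ul D.
  rewrite /Defs.inner mulr_sumr -sumrB; apply eq_bigr => z _; rewrite hfz; ring.
rewrite e /D inner_delta -/D.
have h1 : f x / d x - f y / d y <= (dist E x y)%:R := le_trans (ler_norm _) (hf x y).
have cs : `|inner ul D| <= Num.sqrt (inner ul ul) * Num.sqrt (inner D D) := CS_abs E w hd _ _.
have hD := sqrt_dd x y.
have hD0 : 0 <= Num.sqrt (inner D D) := sqrtr_ge0 _.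
have sU0 : 0 <= Num.sqrt (inner ul ul) := sqrtr_ge0 _.
have h2 : `|inner ul D| <= Num.sqrt (vol E w) * (2 * M).
  apply: (le_trans cs); by apply: ler_pM.
have h3 : - (lam * inner ul D) <= lam * (Num.sqrt (vol E w) * (2 * M)).
  apply: (le_trans (ler_norm _)); rewrite normrN normrM gtr0_norm //.
  by apply: ler_wpM2l => //; apply: ltW.
lra.
Qed.
End Main.


End Part7.
Import Part7.

Theorem mainTheorem7 (R : realType) (V : finType)
  (E : {set {set V}}) (w : {set V} -> R)
  (hE : forall e, e \in E -> (0 < #|e|)%N)
  (hw : forall e, e \in E -> 0 < w e)
  (hd : forall x : V, 0 < deg E w x)
  (hconn : forall x y : V, exists n, walk E x y n)
  (lam mu : R) (hlam : 0 < lam) (hmu : 0 < mu) (x y : V) :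
  `|KD E w lam x y - KD E w mu x y|
    <= 2 * Mconst E w * Num.sqrt (vol E w) * `|lam - mu|.
Proof.
rewrite /KD.
apply: (sup_close _ (lip1 E w)
  (fun f => inner E w (resolvent E w lam f) (fun z => delta x z - delta y z))
  (fun f => inner E w (resolvent E w mu f) (fun z => delta x z - delta y z))
  _ ((dist E x y)%:R + lam * (Num.sqrt (vol E w) * (2 * Mconst E w)))
  ((dist E x y)%:R + mu * (Num.sqrt (vol E w) * (2 * Mconst E w)))
  (fun _ => 0)).
- by move=> a b; rewrite !mul0r subrr normr0 ler0n.
- by move=> f hf; apply: ub_bound.
- by move=> f hf; apply: ub_bound.
- by move=> f hf; apply: key_bound.
Qed.
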